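(* Let $n\ge 2$ be an integer. The Heyting algebra $\mathbb{X}_n^{\ast}$ is infinite and $(n+1)$-generated. Consequently, the variety $\mathbb{V}(\mathbb{X}_n^\ast)$ generated by $\mathbb{X}_n^\ast$ is not locally finite.
   Context: $\mathbb{N}=\{0,1,2,\dots\}$. Fix an integer $n\ge 2$ and put $N=2^{n+1}-1$. Let $T_n$ be the set of triples $\langle k_1,k_2,k_3\rangle$ of pairwise distinct natural numbers $\le N$, with a fixed enumeration $T_n=\{s_0,\dots,s_t\}$. Let $U_n$ be a set of pairwise distinct elements $a_m,b_m$ ($m\in\mathbb{N}$) and $c_{m,k},d_{m,k},e^a_{m,k},e^b_{m,k}$ ($m\in\mathbb{N}$, $0\le k\le N$). Define $x\prec y$ on $U_n$ iff one of: (1) $x=a_m$ and $y\in\{c_{m,k_1},c_{m,k_2}\}$, where $s_j=\langle k_1,k_2,k_3\rangle$ with $j\equiv m \bmod (t+1)$; (2) $x=b_m$ and $y\in\{c_{m,k_1},c_{m,k_3}\}$, with $s_j$ as in (1); (3) $m\ge1$, $x=c_{m,k}$, and either $y=e^a_{m-1,j}$ with $j\ne k$, or $y=e^b_{m-1,i}$ for any $i\le N$; (4) $x=d_{m,k}$ and $y=c_{m,j}$ with $j\neq k$; (5) $x=e^a_{m,k}$ and either $y=a_m$ or $y=d_{m,j}$ with $j\ne k$; (6) $x=e^b_{m,k}$ and either $y=b_m$ or $y=d_{m,j}$ with $j\ne k$. Let $\le$ be the reflexive transitive closure of $\prec$. The $n$-abomination $\mathbb{X}_n$ is the poset $U_n\cup\{\bot\}$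 where $\bot$ is a new least element, with the topology in which $U$ is open iff $\bot\notin U$ or $U$ is cofinite; it is an Esakia space. $\mathbb{X}_n^\ast$ denotes its Esakia dual, the Heyting algebra of clopen upsets of $\mathbb{X}_n$ (with intersection, union, $0=\emptyset$, $1=X_n$, and $U\to V = X_n\setminus{\downarrow}(U\setminus V)$). A variety is locally finite if its finitely generated members are finite. *)

(* Defs.v *)
From Stdlib Require Import List Relation_Operators.
From mathcomp Require Import all_boot.

Set Implicit Arguments.
Unset Strict Implicit.
Unset Printing Implicit Defensive.

(* The n-abomination X_n.  Throughout, N = 2^(n+1) - 1, so the indices  *)
(* k with 0 <= k <= N are the ordinals of 'I_N.+1.       *)

Definition idx (n : nat) := 'I_(2 ^ n.+1).-1.+1.

Definition triple (n : nat) := (idx n * idx n * idx n)%type.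

Definition in_Tn (n : nat) (x : triple n) : bool :=
  let: (k1, k2, k3) := x in [&& k1 != k2, k1 != k3 & k2 != k3].

(* An enumeration s_0, ..., s_t of T_n is a duplicate-free list [e] whose
   elements are exactly the members of T_n (so t + 1 = size e). *)
Definition enumeration_of_Tn (n : nat) (e : seq (triple n)) : Prop :=
  uniq e /\ forall x : triple n, (x \in e) = in_Tn x.

Definition s_of (n : nat) (e : seq (triple n)) (m : nat) : triple n :=
  nth (ord0, ord0, ord0) e (m %% size e).
Definition k1_of n (e : seq (triple n)) (m : nat) : idx n := (s_of e m).1.1.
Definition k2_of n (e : seq (triple n)) (m : nat) : idx n := (s_of e m).1.2.
Definition k3_of n (e : seq (triple n)) (m : nat) : idx n := (s_of e m).2.

(* Points of X_n = U_n ∪ {⊥}. *)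
Inductive pt (n : nat) : Type :=
| Pbot
| Pa  (m : nat)
| Pb  (m : nat)
| Pc  (m : nat) (k : idx n)
| Pd  (m : nat) (k : idx n)
| Pea (m : nat) (k : idx n)
| Peb (m : nat) (k : idx n).
Arguments Pbot {n}.

Inductive prec (n : nat) (e : seq (triple n)) : pt n -> pt n -> Prop :=
| prec1 m k : k = k1_of e m \/ k = k2_of e m -> prec e (Pa n m) (Pc m k)
| prec2 m k : k = k1_of e m \/ k = k3_of e m -> prec e (Pb n m) (Pc m k)
| prec3a m k j : j != k -> prec e (Pc m.+1 k) (Pea m j)
| prec3b m k i : prec e (Pc m.+1 k) (Peb m i)
| prec4 m k j : j != k -> prec e (Pd m k) (Pc m j)
| prec5a m k : prec e (Pea m k) (Pa n m)
| prec5b m k j : j != k -> prec e (Pea m k) (Pd m j)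
| prec6a m k : prec e (Peb m k) (Pb n m)
| prec6b m k j : j != k -> prec e (Peb m k) (Pd m j).

Definition le (n : nat) (e : seq (triple n)) (x y : pt n) : Prop :=
  x = Pbot \/ clos_refl_trans (pt n) (@prec n e) x y.

Definition pset (n : nat) := pt n -> Prop.
Definition set_eq n (S T : pset n) : Prop := forall x, S x <-> T x.

Definition cofinite n (S : pset n) : Prop :=
  exists l : list (pt n), forall x, ~ S x -> In x l.
Definition is_open n (S : pset n) : Prop := ~ S Pbot \/ cofinite S.
Definition is_clopen n (S : pset n) : Prop :=
  is_open S /\ is_open (fun x => ~ S x).
Definition is_upset n (e : seq (triple n)) (S : pset n) : Prop :=
  forall x y, le e x y -> S x -> S y.

(* Elements of the Esakia dual X_n^dual: clopen upsets. *)
Definition clopen_upset n (e : seq (triple n)) (S : pset n) : Prop :=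
  is_clopen S /\ is_upset e S.

Definition botS n : pset n := fun _ => False.
Definition topS n : pset n := fun _ => True.
Definition meetS n (S T : pset n) : pset n := fun x => S x /\ T x.
Definition joinS n (S T : pset n) : pset n := fun x => S x \/ T x.
Definition impS n (e : seq (triple n)) (S T : pset n) : pset n :=
  fun x => ~ exists y, le e x y /\ S y /\ ~ T y.

Definition dual_infinite n (e : seq (triple n)) : Prop :=
  ~ exists l : list (pset n),
      forall S, clopen_upset e S -> exists S', In S' l /\ set_eq S S'.

Inductive dual_gen n (e : seq (triple n)) (G : pset n -> Prop) : pset n -> Prop :=
| dg_base S : G S -> dual_gen e G S
| dg_bot : dual_gen e G (@botS n)
| dg_top : dual_gen e G (@topS n)
| dg_meet S T : dual_gen e G S -> dual_gen e G T -> dual_gen e G (meetS S T)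
| dg_join S T : dual_gen e G S -> dual_gen e G T -> dual_gen e G (joinS S T)
| dg_imp S T : dual_gen e G S -> dual_gen e G T -> dual_gen e G (impS e S T).

Definition dual_k_generated n (e : seq (triple n)) (k : nat) : Prop :=
  exists g : 'I_k -> pset n,
    (forall i, clopen_upset e (g i)) /\
    forall S, clopen_upset e S ->
      exists S', dual_gen e (fun T => exists i, T = g i) S' /\ set_eq S S'.

Record HAlg : Type := {
  hcar : Type;
  hbot : hcar;
  htop : hcar;
  hmeet : hcar -> hcar -> hcar;
  hjoin : hcar -> hcar -> hcar;
  himp : hcar -> hcar -> hcar
}.

Inductive term : Type :=
| tvar (i : nat)
| tbot
| ttop
| tmeet (s t : term)
| tjoin (s t : term)
| timp (s t : term).

Fixpoint heval (B : HAlg) (v : nat -> hcar B) (t : term) : hcar B :=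
  match t with
  | tvar i => v i
  | tbot => hbot B
  | ttop => htop B
  | tmeet s u => hmeet (heval v s) (heval v u)
  | tjoin s u => hjoin (heval v s) (heval v u)
  | timp s u => himp (heval v s) (heval v u)
  end.

Fixpoint deval n (e : seq (triple n)) (v : nat -> pset n) (t : term) : pset n :=
  match t with
  | tvar i => v i
  | tbot => @botS n
  | ttop => @topS n
  | tmeet s u => meetS (deval e v s) (deval e v u)
  | tjoin s u => joinS (deval e v s) (deval e v u)
  | timp s u => impS e (deval e v s) (deval e v u)
  end.

Definition dual_satisfies n (e : seq (triple n)) (s t : term) : Prop :=
  forall v : nat -> pset n, (forall i, clopen_upset e (v i)) ->
    set_eq (deval e v s) (deval e v t).

(* B belongs to V(X_n^dual), i.e. (Birkhoff) B satisfies every identity of X_n^dual. *)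
Definition in_variety_dual n (e : seq (triple n)) (B : HAlg) : Prop :=
  forall s t, dual_satisfies e s t ->
    forall w : nat -> hcar B, heval w s = heval w t.

Inductive hgen (B : HAlg) (G : hcar B -> Prop) : hcar B -> Prop :=
| hg_base x : G x -> hgen G x
| hg_bot : hgen G (hbot B)
| hg_top : hgen G (htop B)
| hg_meet x y : hgen G x -> hgen G y -> hgen G (hmeet x y)
| hg_join x y : hgen G x -> hgen G y -> hgen G (hjoin x y)
| hg_imp x y : hgen G x -> hgen G y -> hgen G (himp x y).

Definition finitely_generated (B : HAlg) : Prop :=
  exists l : list (hcar B), forall x, hgen (fun y => In y l) x.

Definition finite_alg (B : HAlg) : Prop :=
  exists l : list (hcar B), forall x, In x l.

Definition variety_dual_locally_finite n (e : seq (triple n)) : Prop :=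
  forall B : HAlg, in_variety_dual e B -> finitely_generated B -> finite_alg B.

(* Main.v *)
Require Import Defs.
From Stdlib Require Import List Relation_Operators Operators_Properties Classical ProofIrrelevance FunctionalExtensionality PropExtensionality.
From mathcomp Require Import all_boot zify.

Set Implicit Arguments.
Unset Strict Implicit.
Unset Printing Implicit Defensive.

Definition crt n (e : seq (triple n)) := clos_refl_trans (pt n) (@prec n e).

Definition dep n (x : pt n) : nat :=
  match x with
  | Pbot => 0 | Pa m => 3*m+1 | Pb m => 3*m+1 | Pc m _ => 3*m
  | Pd m _ => 3*m+1 | Pea m _ => 3*m+2 | Peb m _ => 3*m+2 end.

Lemma prec_dep n e (x y : pt n) : prec e x y -> dep x = (dep y).+1.
Proof. case => /=; intros; lia. Qed.

Lemma prec_nbot n e (x y : pt n) : prec e x y -> x <> Pbot /\ y <> Pbot.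
Proof. by case=> *; split. Qed.

Lemma crt_cases n e (x y : pt n) : crt e x y -> x = y \/ exists z, prec e x z /\ crt e z y.
Proof.
move=> H0; have H := clos_rt_rt1n _ _ _ _ H0; case: H.
  by left.
move=> y0 z H1 H2; right; exists y0; split=> //; exact: (clos_rt1n_rt _ _ _ _ H2).
Qed.

Lemma crt_dep n e (x y : pt n) : crt e x y -> x = y \/ dep y < dep x.
Proof.
move=> H0; elim: (clos_rt_rt1n _ _ _ _ H0) => [|a b c H1 H2 IH]; first by left.
right; have := prec_dep H1; case: IH => [<-|]; lia.
Qed.

Lemma crt_nbot n e (x y : pt n) : crt e x y -> x <> Pbot -> y <> Pbot.
Proof.
move=> H0; elim: (clos_rt_rt1n _ _ _ _ H0) => [//|a b c H1 H2 IH] _.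
exact: IH (proj2 (prec_nbot H1)).
Qed.

Lemma le_crt n e (x y : pt n) : x <> Pbot -> le e x y -> crt e x y.
Proof. by move=> Hx [|]. Qed.

Lemma le_refl n e (x : pt n) : le e x x.
Proof. right; exact: rt_refl. Qed.

Lemma le_bot n e (x : pt n) : le e Pbot x.
Proof. by left. Qed.

Lemma le_trans n e (x y z : pt n) : le e x y -> le e y z -> le e x z.
Proof.
case=> [->|Hxy]; first by left.
case=> [Hy|Hyz]; last by right; exact: rt_trans Hxy Hyz.
subst y; case: (classic (x = Pbot)) => [->|Hx]; first by left.
by case: (crt_nbot Hxy Hx).
Qed.

Lemma prec_le n e (x y : pt n) : prec e x y -> le e x y.
Proof. by move=> H; right; apply: rt_step. Qed.

Lemma le_dep n e (x y : pt n) : x <> Pbot -> le e x y -> x = y \/ dep y < dep x.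
Proof. move=> Hx H; exact: crt_dep (le_crt Hx H). Qed.

Lemma le_nbot n e (x y : pt n) : x <> Pbot -> le e x y -> y <> Pbot.
Proof. move=> Hx H; exact: crt_nbot (le_crt Hx H) Hx. Qed.

Lemma le_step n e (x v : pt n) : x <> Pbot -> le e x v -> x = v \/ exists y, prec e x y /\ le e y v.
Proof.
move=> Hx H; case: (crt_cases (le_crt Hx H)) => [->|[y [H1 H2]]]; [by left|right].
by exists y; split=> //; right.
Qed.

Lemma le_cover n e (x w : pt n) : x <> Pbot -> le e x w -> (dep w).+1 = dep x -> prec e x w.
Proof.
move=> Hx H Hd; case: (le_step Hx H) => [Exw|[y [H1 H2]]].
  by subst; lia.
have := prec_dep H1; have [Hy1 Hy2] := prec_nbot H1.
case: (le_dep Hy2 H2) => [<-//|]; lia.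
Qed.

Lemma maximal0 n e (k : idx n) z : le e (Pc 0 k) z -> z = Pc 0 k.
Proof.
move=> H; case: (le_step (x:=Pc 0 k) ltac:(discriminate) H) => [->//|[y [H1 _]]].
by inversion H1.
Qed.

Lemma In_mem (T : eqType) (x : T) (s : seq T) : x \in s -> In x s.
Proof.
elim: s => [//|y s IH]; rewrite in_cons => /orP [/eqP ->|H]; [by left | right; exact: IH].
Qed.

Lemma In_map_iff (A B : Type) (f : A -> B) (s : seq A) y :
  In y [seq f x | x <- s] <-> exists x, In x s /\ y = f x.
Proof.
elim: s => [|a s IH] /=; first by split=> // - [x []].
split.
  case=> [<-|/IH [x [H1 H2]]]; first by exists a; split=> //; left.
  by exists x; split=> //; right.
case=> x [[<-|H1] H2]; first by left.
by right; apply/IH; exists x.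
Qed.

Lemma In_cat_iff (A : Type) (x : A) (s1 s2 : seq A) : In x (s1 ++ s2) <-> In x s1 \/ In x s2.
Proof.
elim: s1 => [|a s IH] /=; first by split=> [|[]]//; right.
split.
  case=> [->|/IH [H|H]]; [left; left | left; right | right] => //.
case=> [[->|H]|H]; [by left | right; apply/IH; left | right; apply/IH; right] => //.
Qed.

Definition allI n : seq (idx n) := enum (idx n).
Lemma In_allI n (k : idx n) : In k (allI n).
Proof. by apply: In_mem; rewrite mem_enum. Qed.

Definition others n (k : idx n) : seq (idx n) := [seq j <- allI n | j != k].
Lemma In_others n (k j : idx n) : In j (others k) <-> j != k.
Proof.
split.
  rewrite /others; elim: (allI n) => [//|a s IH] /=.
  case: ifP => Ha /=; last exact IH.
  case=> [<-//|]; exact IH.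
move=> H; apply: In_mem; by rewrite mem_filter H mem_enum.
Qed.

Lemma N_big n : 2 <= n -> 7 <= (2 ^ n.+1).-1.
Proof.
move=> hn; have : 2 ^ 3 <= 2 ^ n.+1 by rewrite leq_exp2l.
rewrite (_ : 2 ^ 3 = 8) //; lia.
Qed.

Lemma witness3 n (hn : 2 <= n) (a b c : idx n) : exists j : idx n, j != a /\ j != b /\ j != c.
Proof.
have [i [Hi [Ha [Hb Hc]]]] : exists i, i < 4 /\ i <> a /\ i <> b /\ i <> c.
  apply: NNPP => H.
  have H0 : ~ (0 < 4 /\ 0 <> a /\ 0 <> b /\ 0 <> c) by move=> h; apply: H; exists 0.
  have H1 : ~ (1 < 4 /\ 1 <> a /\ 1 <> b /\ 1 <> c) by move=> h; apply: H; exists 1.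
  have H2 : ~ (2 < 4 /\ 2 <> a /\ 2 <> b /\ 2 <> c) by move=> h; apply: H; exists 2.
  have H3 : ~ (3 < 4 /\ 3 <> a /\ 3 <> b /\ 3 <> c) by move=> h; apply: H; exists 3.
  lia.
have HN := N_big hn.
have Hi' : i < (2 ^ n.+1).-1.+1 by lia.
exists (inord i); rewrite /idx.
by split; [|split]; apply/eqP => E; move: (congr1 val E); rewrite /= inordK.
Qed.

Lemma trip_ok n (e : seq (triple n)) (hn : 2 <= n) (he : enumeration_of_Tn e) m :
  k1_of e m != k2_of e m /\ k1_of e m != k3_of e m /\ k2_of e m != k3_of e m.
Proof.
case: he => [Hu Hm].
have HN := N_big hn.
have H0 : 0 < (2 ^ n.+1).-1.+1 by [].
have H1 : 1 < (2 ^ n.+1).-1.+1 by lia.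
have H2 : 2 < (2 ^ n.+1).-1.+1 by lia.
pose t : triple n := (inord 0, inord 1, inord 2).
have Ht : t \in e.
  rewrite Hm /in_Tn /t.
  by apply/and3P; split; apply/eqP => E; move: (congr1 val E); rewrite /= !inordK.
have Hs : 0 < size e by case: e Ht {Hu Hm}.
have : s_of e m \in e by rewrite /s_of; apply: mem_nth; rewrite ltn_pmod.
rewrite Hm /k1_of /k2_of /k3_of.
by case: (s_of e m) => [[a b] c] /= /and3P [-> -> ->].
Qed.

Definition covers n (e : seq (triple n)) (x : pt n) : seq (pt n) :=
  match x with
  | Pbot => [::]
  | Pa m => [:: Pc m (k1_of e m); Pc m (k2_of e m)]
  | Pb m => [:: Pc m (k1_of e m); Pc m (k3_of e m)]
  | Pc 0 _ => [::]
  | Pc m.+1 k => [seq Pea m j | j <- others k] ++ [seq Peb m i | i <- allI n]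
  | Pd m k => [seq Pc m j | j <- others k]
  | Pea m k => Pa n m :: [seq Pd m j | j <- others k]
  | Peb m k => Pb n m :: [seq Pd m j | j <- others k]
  end.

Ltac neqs := repeat match goal with H : is_true (_ != _) |- _ => move/eqP: H => H end.

Lemma covers_spec n (e : seq (triple n)) (x y : pt n) : In y (covers e x) <-> prec e x y.
Proof.
split.
- case: x => [|m|m|[|m] k|m k|m k|m k] //=.
  + by case=> [<-|[<-|[]]]; constructor; [left|right].
  + by case=> [<-|[<-|[]]]; constructor; [left|right].
  + case/In_cat_iff => /In_map_iff [j [Hj ->]]; constructor.
    by apply/In_others.
  + by case/In_map_iff => j [/In_others Hj ->]; constructor.
  + by case=> [<-|/In_map_iff [j [/In_others Hj ->]]]; constructor.
  + by case=> [<-|/In_map_iff [j [/In_others Hj ->]]]; constructor.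
- case=> /=.
  + by move=> m k [->|->]; [left|right; left].
  + by move=> m k [->|->]; [left|right; left].
  + move=> m k j Hj; apply/In_cat_iff; left; apply/In_map_iff; exists j; split=> //.
    exact/In_others.
  + move=> m k i; apply/In_cat_iff; right; apply/In_map_iff; exists i; split=> //.
    exact: In_allI.
  + by move=> m k j Hj; apply/In_map_iff; exists j; split=> //; apply/In_others.
  + by move=> m k; left.
  + by move=> m k j Hj; right; apply/In_map_iff; exists j; split=> //; apply/In_others.
  + by move=> m k; left.
  + by move=> m k j Hj; right; apply/In_map_iff; exists j; split=> //; apply/In_others.
Qed.

Definition layer n (d : nat) : seq (pt n) :=
  let m := d %/ 3 in
  match d %% 3 with
  | 0 => [seq Pc m j | j <- allI n]
  | 1 => Pa n m :: Pb n m :: [seq Pd m j | j <- allI n]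
  | _ => [seq Pea m j | j <- allI n] ++ [seq Peb m j | j <- allI n]
  end.

Lemma layer_spec n d (w : pt n) : In w (layer n d) <-> w <> Pbot /\ dep w = d.
Proof.
split.
- rewrite /layer; have : d %% 3 < 3 by rewrite ltn_mod.
  case E: (d %% 3) => [|[|[|r]]] // _.
  + by case/In_map_iff => j [_ ->]; split=> //=; lia.
  + case=> [<-|[<-|/In_map_iff [j [_ ->]]]]; split=> //=; lia.
  + case/In_cat_iff => /In_map_iff [j [_ ->]]; split=> //=; lia.
- case=> Hw <-; rewrite /layer.
  case: w Hw => [|m|m|m k|m k|m k|m k] //= _.
  + have -> : (3*m+1) %% 3 = 1 by lia. have -> : (3*m+1) %/ 3 = m by lia.
    by left.
  + have -> : (3*m+1) %% 3 = 1 by lia. have -> : (3*m+1) %/ 3 = m by lia.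
    by right; left.
  + have -> : (3*m) %% 3 = 0 by lia. have -> : (3*m) %/ 3 = m by lia.
    by apply/In_map_iff; exists k; split=> //; apply: In_allI.
  + have -> : (3*m+1) %% 3 = 1 by lia. have -> : (3*m+1) %/ 3 = m by lia.
    by right; right; apply/In_map_iff; exists k; split=> //; apply: In_allI.
  + have -> : (3*m+2) %% 3 = 2 by lia. have -> : (3*m+2) %/ 3 = m by lia.
    by apply/In_cat_iff; left; apply/In_map_iff; exists k; split=> //; apply: In_allI.
  + have -> : (3*m+2) %% 3 = 2 by lia. have -> : (3*m+2) %/ 3 = m by lia.
    by apply/In_cat_iff; right; apply/In_map_iff; exists k; split=> //; apply: In_allI.
Qed.

Fixpoint upto n d : seq (pt n) :=
  match d with 0 => layer n 0 | d'.+1 => layer n d ++ upto n d' end.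

Lemma In_upto n d (w : pt n) : w <> Pbot -> dep w <= d -> In w (upto n d).
Proof.
move=> Hw; elim: d => [|d IH] Hd /=.
  by apply/layer_spec; split=> //; lia.
apply/In_cat_iff; case: (ltnP (dep w) d.+1) => H.
  by right; apply: IH.
by left; apply/layer_spec; split=> //; lia.
Qed.

Lemma two_covers n (e : seq (triple n)) (hn : 2 <= n) (hE : enumeration_of_Tn e) (x q : pt n) :
  x <> Pbot -> 0 < dep x -> exists y, prec e x y /\ y <> q.
Proof.
case: x => [|m|m|[|m] k|m k|m k|m k] //= _ Hd.
- have [/eqP H12 _] := trip_ok hn hE m.
  case: (classic (q = Pc m (k1_of e m))) => Hq.
    exists (Pc m (k2_of e m)); split; first by constructor; right.
    by rewrite Hq => [[E]]; apply: H12.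
  by exists (Pc m (k1_of e m)); split; [constructor; left | move/esym].
- have [_ [/eqP H13 _]] := trip_ok hn hE m.
  case: (classic (q = Pc m (k1_of e m))) => Hq.
    exists (Pc m (k3_of e m)); split; first by constructor; right.
    by rewrite Hq => [[E]]; apply: H13.
  by exists (Pc m (k1_of e m)); split; [constructor; left | move/esym].
- have [j [Hj _]] := witness3 hn k k k.
  case: (classic (q = Peb m k)) => Hq.
    by exists (Pea m j); split; [constructor | rewrite Hq].
  by exists (Peb m k); split; [constructor | move/esym].
- have [j [Hj _]] := witness3 hn k k k.
  case: (classic (q = Pc m j)) => Hq.
    have [j' [Hj1 [Hj2 _]]] := witness3 hn k j j.
    exists (Pc m j'); split; first by constructor.
    by rewrite Hq => [[E]]; move: Hj2; rewrite E eqxx.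
  by exists (Pc m j); split; [constructor | move/esym].
- have [j [Hj _]] := witness3 hn k k k.
  case: (classic (q = Pa n m)) => Hq.
    by exists (Pd m j); split; [constructor | rewrite Hq].
  by exists (Pa n m); split; [constructor | move/esym].
- have [j [Hj _]] := witness3 hn k k k.
  case: (classic (q = Pb n m)) => Hq.
    by exists (Pd m j); split; [constructor | rewrite Hq].
  by exists (Pb n m); split; [constructor | move/esym].
Qed.

Lemma up_walk n (e : seq (triple n)) (hn : 2 <= n) (hE : enumeration_of_Tn e) :
  forall k (z : pt n), dep z = k -> z <> Pbot -> forall d, d <= k ->
  exists w, le e z w /\ w <> Pbot /\ dep w = d.
Proof.
elim/ltn_ind => k IH z Hk Hz d Hd.
case: (ltnP d k) => Hdk; last first.
  by exists z; split; [apply: le_refl | split=> //; lia].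
have [y [Hy _]] := two_covers hn hE Pbot Hz ltac:(lia).
have Hdy := prec_dep Hy; have [_ Hyb] := prec_nbot Hy.
have [w [H1 H2]] := IH (dep y) ltac:(lia) y erefl Hyb d ltac:(lia).
by exists w; split=> //; apply: le_trans (prec_le Hy) H1.
Qed.

Lemma up_avoid n (e : seq (triple n)) (hn : 2 <= n) (hE : enumeration_of_Tn e) (z x : pt n) :
  z <> Pbot -> dep x < dep z -> exists w, le e z w /\ w <> Pbot /\ dep w = dep x /\ w <> x.
Proof.
move=> Hz Hd.
have [z' [H1 [H2 H3]]] := up_walk hn hE erefl Hz Hd.
have [y [Hy Hyx]] := two_covers hn hE x H2 ltac:(lia).
have Hdy := prec_dep Hy; have [_ Hyb] := prec_nbot Hy.
exists y; split; first exact: le_trans H1 (prec_le Hy).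
split=> //; split=> //; lia.
Qed.

Lemma depth0 n (w : pt n) : w <> Pbot -> dep w = 0 -> exists k, w = Pc 0 k.
Proof.
case: w => [|m|m|m k|m k|m k|m k] //= _ H; try lia.
by exists k; have -> : m = 0 by lia.
Qed.

Ltac selfneq := match goal with h : is_true (?a != ?a) |- _ => by rewrite eqxx in h end.

Lemma rigid n (e : seq (triple n)) (hn : 2 <= n) (hE : enumeration_of_Tn e) (x w : pt n) :
  x <> Pbot -> w <> Pbot -> dep x = dep w -> 0 < dep x ->
  (forall u, prec e x u -> prec e w u) -> (forall u, prec e w u -> prec e x u) -> x = w.
Proof.
case: x => [|m|m|m k|m k|m k|m k] //; case: w => [|m'|m'|m' k'|m' k'|m' k'|m' k'] //= _ _ Hd Hp H1 H2.
all: try lia.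
all: have Em : m' = m by lia.
all: subst m'; try done.
- have [/eqP H12 [/eqP H13 /eqP H23]] := trip_ok hn hE m.
  have : prec e (Pb n m) (Pc m (k2_of e m)) by apply: H1; constructor; right.
  move=> H; inversion H; subst; intuition congruence.
- have [/eqP H12 [/eqP H13 /eqP H23]] := trip_ok hn hE m.
  have [j [/eqP Hj1 [/eqP Hj2 /eqP Hj3]]] := witness3 hn (k1_of e m) (k2_of e m) k'.
  have : prec e (Pa n m) (Pc m j) by apply: H2; constructor; apply/eqP; assumption.
  move=> H; inversion H; subst; intuition congruence.
- have [/eqP H12 [/eqP H13 /eqP H23]] := trip_ok hn hE m.
  have : prec e (Pa n m) (Pc m (k3_of e m)) by apply: H1; constructor; right.
  move=> H; inversion H; subst; intuition congruence.
- have [/eqP H12 [/eqP H13 /eqP H23]] := trip_ok hn hE m.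
  have [j [/eqP Hj1 [/eqP Hj2 /eqP Hj3]]] := witness3 hn (k1_of e m) (k3_of e m) k'.
  have : prec e (Pb n m) (Pc m j) by apply: H2; constructor; apply/eqP; assumption.
  move=> H; inversion H; subst; intuition congruence.
- case: m Hd Hp H1 H2 => [|p] Hd Hp H1 H2; first lia.
  case: (eqVneq k k') => [->//|Hkk].
  have : prec e (Pc p.+1 k') (Pea p k') by apply: H1; constructor; rewrite eq_sym.
  by move=> H; inversion H; subst; selfneq.
- have [/eqP H12 [/eqP H13 /eqP H23]] := trip_ok hn hE m.
  have [j [/eqP Hj1 [/eqP Hj2 /eqP Hj3]]] := witness3 hn (k1_of e m) (k2_of e m) k.
  have : prec e (Pa n m) (Pc m j) by apply: H1; constructor; apply/eqP; assumption.
  move=> H; inversion H; subst; intuition congruence.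
- have [/eqP H12 [/eqP H13 /eqP H23]] := trip_ok hn hE m.
  have [j [/eqP Hj1 [/eqP Hj2 /eqP Hj3]]] := witness3 hn (k1_of e m) (k3_of e m) k.
  have : prec e (Pb n m) (Pc m j) by apply: H1; constructor; apply/eqP; assumption.
  move=> H; inversion H; subst; intuition congruence.
- case: (eqVneq k k') => [->//|Hkk].
  have : prec e (Pd m k') (Pc m k') by apply: H1; constructor; rewrite eq_sym.
  by move=> H; inversion H; subst; selfneq.
- case: (eqVneq k k') => [->//|Hkk].
  have : prec e (Pea m k') (Pd m k') by apply: H1; constructor; rewrite eq_sym.
  by move=> H; inversion H; subst; selfneq.
- have : prec e (Peb m k') (Pa n m) by apply: H1; constructor.
  by move=> H; inversion H.
- have : prec e (Pea m k') (Pb n m) by apply: H1; constructor.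
  by move=> H; inversion H.
- case: (eqVneq k k') => [->//|Hkk].
  have : prec e (Peb m k') (Pd m k') by apply: H1; constructor; rewrite eq_sym.
  by move=> H; inversion H; subst; selfneq.
Qed.

Lemma two_layer n (e : seq (triple n)) (hn : 2 <= n) (hE : enumeration_of_Tn e) (x y : pt n) :
  x <> Pbot -> y <> Pbot -> (dep y).+2 = dep x -> le e x y.
Proof.
move=> Hx Hy Hd.
have L2 : forall a b c : pt n, prec e a b -> prec e b c -> le e a c.
  by move=> a b c H1 H2; apply: le_trans (prec_le H1) (prec_le H2).
case: y Hy Hd => [|m|m|m t|m t|m t|m t] //= _;
case: x Hx => [|m'|m'|m' k|m' k|m' k|m' k] //= _ Hd; try lia.
- have -> : m' = m.+1 by lia.
  have [j [Hj _]] := witness3 hn k k k.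
  by apply: (L2 _ (Pea m j)); constructor.
- have -> : m' = m.+1 by lia.
  by apply: (L2 _ (Peb m k)); constructor.
- have -> : m' = m by lia.
  have [j [Hj1 [Hj2 _]]] := witness3 hn k t t.
  by apply: (L2 _ (Pd m j)); constructor; rewrite // eq_sym.
- have -> : m' = m by lia.
  have [j [Hj1 [Hj2 _]]] := witness3 hn k t t.
  by apply: (L2 _ (Pd m j)); constructor; rewrite // eq_sym.
- have -> : m' = m.+1 by lia.
  have [j [Hj _]] := witness3 hn t t t.
  by apply: (L2 _ (Peb m j)); constructor; rewrite // eq_sym.
- have -> : m' = m.+1 by lia.
  have [/eqP H12 _] := trip_ok hn hE m.+1.
  case: (eqVneq (k1_of e m.+1) t) => Ht.
    apply: (L2 _ (Pc m.+1 (k2_of e m.+1))); constructor; first by right.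
    by apply/eqP => E; apply: H12; rewrite Ht E.
  by apply: (L2 _ (Pc m.+1 (k1_of e m.+1))); constructor; [left | rewrite eq_sym].
- have -> : m' = m.+1 by lia.
  have [_ [/eqP H13 _]] := trip_ok hn hE m.+1.
  case: (eqVneq (k1_of e m.+1) t) => Ht.
    apply: (L2 _ (Pc m.+1 (k3_of e m.+1))); constructor; first by right.
    by apply/eqP => E; apply: H13; rewrite Ht E.
  by apply: (L2 _ (Pc m.+1 (k1_of e m.+1))); constructor; [left | rewrite eq_sym].
- have -> : m' = m.+1 by lia.
  have [j [Hj1 [Hj2 _]]] := witness3 hn k t t.
  by apply: (L2 _ (Pc m.+1 j)); constructor; rewrite // eq_sym.
- have -> : m' = m.+1 by lia.
  by apply: (L2 _ (Pc m.+1 (k1_of e m.+1))); constructor; left.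
- have -> : m' = m.+1 by lia.
  by apply: (L2 _ (Pc m.+1 (k1_of e m.+1))); constructor; left.
- have -> : m' = m.+1 by lia.
  have [j [Hj1 _]] := witness3 hn k k k.
  by apply: (L2 _ (Pc m.+1 j)); constructor; rewrite // eq_sym.
Qed.

Lemma deep n (e : seq (triple n)) (hn : 2 <= n) (hE : enumeration_of_Tn e) (x y : pt n) :
  x <> Pbot -> y <> Pbot -> (dep y).+2 <= dep x -> le e x y.
Proof.
move=> Hx Hy Hd.
have [w [H1 [H2 H3]]] := up_walk hn hE erefl Hx Hd.
apply: le_trans H1 _; apply: (two_layer hn hE H2 Hy); by rewrite H3.
Qed.

Lemma seq_refl n (S : pset n) : set_eq S S.
Proof. by move=> x. Qed.
Lemma seq_sym n (S T : pset n) : set_eq S T -> set_eq T S.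
Proof. by move=> H x; split; move/H. Qed.
Lemma seq_trans n (S T V : pset n) : set_eq S T -> set_eq T V -> set_eq S V.
Proof. by move=> H1 H2 x; split; [move/H1/H2 | move/H2/H1]. Qed.

Definition bit (i k : nat) : bool := odd (k %/ 2 ^ i).
Definition gen n (i : 'I_n.+1) : pset n := fun z => exists k : idx n, z = Pc 0 k /\ bit i k.
Definition GG n : pset n -> Prop := fun T => exists i : 'I_n.+1, T = gen i.
Definition Gen n (e : seq (triple n)) (S : pset n) := exists S', dual_gen e (@GG n) S' /\ set_eq S S'.

Lemma Gen_ext n (e : seq (triple n)) (S T : pset n) : set_eq S T -> Gen e S -> Gen e T.
Proof. move=> H [S' [H1 H2]]; exists S'; split=> //; exact: seq_trans (seq_sym H) H2. Qed.

Lemma Gen_top n (e : seq (triple n)) : Gen e (@topS n).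
Proof. exists (@topS n); split; [exact: dg_top | exact: seq_refl]. Qed.
Lemma Gen_bot n (e : seq (triple n)) : Gen e (@botS n).
Proof. exists (@botS n); split; [exact: dg_bot | exact: seq_refl]. Qed.
Lemma Gen_gen n (e : seq (triple n)) i : Gen e (@gen n i).
Proof. exists (gen i); split; [apply: dg_base; by exists i | exact: seq_refl]. Qed.

Lemma Gen_meet n (e : seq (triple n)) (S T : pset n) : Gen e S -> Gen e T -> Gen e (meetS S T).
Proof.
move=> [S' [H1 H2]] [T' [H3 H4]]; exists (meetS S' T'); split; first exact: dg_meet.
move=> x; rewrite /meetS; split; case=> a b; split; by [apply/H2|apply/H4].
Qed.
Lemma Gen_join n (e : seq (triple n)) (S T : pset n) : Gen e S -> Gen e T -> Gen e (joinS S T).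
Proof.
move=> [S' [H1 H2]] [T' [H3 H4]]; exists (joinS S' T'); split; first exact: dg_join.
move=> x; rewrite /joinS; split; case=> a; by [left; apply/H2 | right; apply/H4].
Qed.

Lemma impS_ext n (e : seq (triple n)) (S S' T T' : pset n) :
  set_eq S S' -> set_eq T T' -> set_eq (impS e S T) (impS e S' T').
Proof.
move=> H1 H2 x; rewrite /impS; split=> H [y [Hy1 [Hy2 Hy3]]]; apply: H; exists y; split=> //.
  by split; [apply/H1 | move/H2].
by split; [apply/H1 | move/H2].
Qed.

Lemma Gen_imp n (e : seq (triple n)) (S T : pset n) : Gen e S -> Gen e T -> Gen e (impS e S T).
Proof.
move=> [S' [H1 H2]] [T' [H3 H4]]; exists (impS e S' T'); split; first exact: dg_imp.
exact: impS_ext.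
Qed.

Definition bigI n (A : Type) (l : seq A) (F : A -> pset n) : pset n :=
  fun z => forall a, In a l -> F a z.
Definition bigU n (A : Type) (l : seq A) (F : A -> pset n) : pset n :=
  fun z => exists a, In a l /\ F a z.

Lemma Gen_bigI n (e : seq (triple n)) (A : Type) (l : seq A) (F : A -> pset n) :
  (forall a, In a l -> Gen e (F a)) -> Gen e (bigI l F).
Proof.
elim: l => [|a l IH] H.
  by apply: Gen_ext (Gen_top e) => x; split=> // _ a [].
apply: Gen_ext (Gen_meet (H a (or_introl erefl)) (IH (fun b Hb => H b (or_intror Hb)))).
move=> x; split.
  by case=> H1 H2 b [<-|Hb] //; apply: H2.
by move=> H1; split; [apply: H1; left | move=> b Hb; apply: H1; right].
Qed.

Lemma Gen_bigU n (e : seq (triple n)) (A : Type) (l : seq A) (F : A -> pset n) :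
  (forall a, In a l -> Gen e (F a)) -> Gen e (bigU l F).
Proof.
elim: l => [|a l IH] H.
  by apply: Gen_ext (Gen_bot e) => x; split=> // - [b [[]]].
apply: Gen_ext (Gen_join (H a (or_introl erefl)) (IH (fun b Hb => H b (or_intror Hb)))).
move=> x; split.
  by case=> [Ha|[b [Hb Hx]]]; [exists a; split=> //; left | exists b; split=> //; right].
by case=> b [[<-|Hb] Hx]; [left | right; exists b].
Qed.

Definition up n (e : seq (triple n)) (x : pt n) : pset n := fun z => le e x z.
Definition Nd n (e : seq (triple n)) (x : pt n) : pset n := fun z => ~ le e z x.
Definition Uc n (e : seq (triple n)) (x : pt n) : pset n := bigU (covers e x) (up e).

Lemma Uc_up n (e : seq (triple n)) (x z : pt n) : Uc e x z -> le e x z.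
Proof. case=> y [/covers_spec Hy Hz]; exact: le_trans (prec_le Hy) Hz. Qed.

Lemma Nd_eq n (e : seq (triple n)) (x : pt n) : x <> Pbot ->
  set_eq (Nd e x) (impS e (up e x) (Uc e x)).
Proof.
move=> Hx z; rewrite /Nd /impS /up; split.
  move=> H [v [Hzv [Hxv HU]]].
  case: (le_step Hx Hxv) => [Exv|[y [Hy Hyv]]].
    by subst v; apply: H.
  by apply: HU; exists y; split=> //; apply/covers_spec.
move=> H Hzx; apply: H; exists x; split=> //; split; first exact: le_refl.
case=> y [/covers_spec Hy Hyx].
have := prec_dep Hy; have [_ Hyb] := prec_nbot Hy.
case: (le_dep Hyb Hyx) => [E|]; [subst y; lia | lia].
Qed.

Lemma impS_up n (e : seq (triple n)) (S T : pset n) z z' :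
  impS e S T z -> le e z z' -> impS e S T z'.
Proof.
move=> H Hz [v [Hv1 Hv2]]; apply: H; exists v; split=> //; exact: le_trans Hz Hv1.
Qed.

Lemma bits_inj : forall p a b, a < 2 ^ p -> b < 2 ^ p ->
  (forall i, i < p -> bit i a = bit i b) -> a = b.
Proof.
elim=> [|p IH] a b Ha Hb H.
  by move: Ha Hb; rewrite expn0 !ltnS !leqn0 => /eqP -> /eqP ->.
have H0 : odd a = odd b by have := H 0 erefl; rewrite /bit expn0 !divn1.
have Hd : a %/ 2 = b %/ 2.
  apply: IH.
  - by rewrite ltn_divLR // -expnSr.
  - by rewrite ltn_divLR // -expnSr.
  move=> i Hi; have := H i.+1 Hi; rewrite /bit expnS !divnMA; exact.
by rewrite (divn_eq a 2) (divn_eq b 2) !modn2 Hd H0.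
Qed.

Lemma idx_lt n (k : idx n) : (k : nat) < 2 ^ n.+1.
Proof. have := ltn_ord k; have := expn_gt0 2 n.+1; rewrite /=; lia. Qed.

Lemma gen_up n (e : seq (triple n)) i (z z' : pt n) : gen i z -> le e z z' -> gen i z'.
Proof. by case=> k [-> Hb] /maximal0 ->; exists k. Qed.

Lemma other_max n (e : seq (triple n)) (hn : 2 <= n) (hE : enumeration_of_Tn e) (k : idx n) x :
  ~ le e (Pc 0 k) x -> exists k', k' != k /\ le e x (Pc 0 k').
Proof.
move=> Hn.
case: (classic (x = Pbot)) => [->|Hx].
  by have [k' [Hk _]] := witness3 hn k k k; exists k'; split=> //; left.
case: (posnP (dep x)) => Hd.
  have [k'' E] := depth0 Hx Hd; subst x.
  exists k''; split; last exact: le_refl.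
  by apply/eqP => E; subst; apply: Hn; apply: le_refl.
have [w [H1 [H2 [H3 H4]]]] := up_avoid hn hE (x := Pc 0 k) Hx Hd.
have [k' E] := depth0 H2 H3; subst w.
by exists k'; split=> //; apply/eqP => E; subst.
Qed.

Lemma Gen_up0 n (e : seq (triple n)) (hn : 2 <= n) (hE : enumeration_of_Tn e) (k : idx n) :
  Gen e (up e (Pc 0 k)).
Proof.
pose L (i : 'I_n.+1) : pset n := if bit i k then gen i else impS e (gen i) (@botS n).
have HL : forall i z z', L i z -> le e z z' -> L i z'.
  move=> i z z'; rewrite /L; case: ifP => _; [exact: gen_up | exact: impS_up].
have HG : Gen e (bigI (enum 'I_n.+1) L).
  apply: Gen_bigI => i _; rewrite /L; case: ifP => _.
    exact: Gen_gen.
  exact: Gen_imp (Gen_gen e i) (Gen_bot e).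
apply: Gen_ext HG => x; split.
- move=> H; apply: NNPP => Hn.
  have [k' [Hk' Hle]] := other_max hn hE Hn.
  have Hw : forall i, In i (enum 'I_n.+1) -> L i (Pc 0 k') by move=> i Hi; exact: HL (H i Hi) Hle.
  have Hb : forall i, i < n.+1 -> bit i k' = bit i k.
    move=> i Hi; have := Hw (Ordinal Hi) (In_mem (mem_enum _ _)).
    rewrite /L /=; case: ifP => Eb.
      by case=> k'' [[->] Hb].
    move=> Himp; apply/negbTE/negP => Hb'; apply: Himp.
    exists (Pc 0 k'); split; first exact: le_refl.
    by split=> //; exists k'.
  move/eqP: Hk'; apply; apply: val_inj; apply: (bits_inj (p := n.+1)) => //; exact: idx_lt.
- move=> /maximal0 -> i _; rewrite /L; case: ifP => Eb.
    by exists k.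
  move=> [v [/maximal0 -> [[k'' [[E] Hb]] _]]].
  by subst k''; rewrite Hb in Eb.
Qed.

Lemma Gen_up n (e : seq (triple n)) (hn : 2 <= n) (hE : enumeration_of_Tn e) :
  forall d (x : pt n), dep x = d -> x <> Pbot -> Gen e (up e x).
Proof.
elim/ltn_ind => d IH x Hd Hx.
have IHU : forall y : pt n, y <> Pbot -> dep y <= d -> Gen e (Uc e y).
  move=> y Hy Hyd; apply: Gen_bigU => z /covers_spec Hz.
  have := prec_dep Hz; have [_ Hzb] := prec_nbot Hz => Hdz.
  apply: (IH (dep z)) => //; lia.
have IHN : forall y : pt n, y <> Pbot -> dep y < d -> Gen e (Nd e y).
  move=> y Hy Hyd; apply: Gen_ext (seq_sym (Nd_eq e Hy)) _.
  apply: Gen_imp; first exact: (IH (dep y)).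
  apply: IHU => //; lia.
case: (posnP d) => Hd0.
  subst d; have [k ->] := depth0 Hx Hd0; exact: Gen_up0.
pose C := covers e x.
pose P := bigI (layer n d.-1) (fun w => fun z => In w C \/ ~ le e z w).
pose R := bigI C (fun y => impS e (Nd e y) (Uc e x)).
have HG : Gen e (meetS P R).
  apply: Gen_meet.
    apply: Gen_bigI => w /layer_spec [Hw Hwd].
    case: (classic (In w C)) => Hin.
      by apply: Gen_ext (Gen_top e) => z; split=> // _; left.
    apply: Gen_ext (IHN w Hw ltac:(lia)) => z; split; first by right.
    by case.
  apply: Gen_bigI => y /covers_spec Hy; apply: Gen_imp.
    have := prec_dep Hy; have [_ Hyb] := prec_nbot Hy => Hdy.
    apply: IHN => //; lia.
  apply: IHU => //; lia.
have Hup : forall z z', meetS P R z -> le e z z' -> meetS P R z'.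
  move=> z z' [HP HR] Hzz'; split.
    move=> w Hw; case: (HP w Hw) => [H|H]; [by left | right => H'; apply: H; exact: le_trans Hzz' H'].
  move=> y Hy; exact: impS_up (HR y Hy) Hzz'.
apply: Gen_ext HG => z; split.
- move=> [HP HR]; apply: NNPP => Hn.
  have HUx : ~ Uc e x z by move/Uc_up.
  have [y0 [Hy0 _]] := two_covers hn hE Pbot Hx ltac:(lia).
  have Hdy0 := prec_dep Hy0.
  have [w [Hzw [Hwb [Hwd Hwx]]]] : exists w, le e z w /\ w <> Pbot /\ dep w = d /\ w <> x.
    case: (classic (z = Pbot)) => Hz.
      have Hc : (Pc d (@ord0 (2 ^ n.+1).-1) : pt n) <> Pbot by [].
      have [w [H1 [H2 [H3 H4]]]] := up_avoid hn hE (x := x) Hc ltac:(rewrite /=; lia).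
      by exists w; split; [rewrite Hz; left | split=> //; split=> //; lia].
    have Hzy0 : le e z y0.
      have := HR y0 (proj2 (covers_spec _ _ _) Hy0); rewrite /impS => H.
      apply: NNPP => Hn'; apply: H; exists z; split; first exact: le_refl.
      by split.
    case: (le_dep Hz Hzy0) => [E|Hlt].
      subst z; exfalso; apply: HUx; exists y0; split; [exact/covers_spec | exact: le_refl].
    case: (ltngtP (dep z) d) => Hzd; first lia.
      have [w [H1 [H2 [H3 H4]]]] := up_avoid hn hE (x := x) Hz ltac:(lia).
      by exists w; split=> //; split=> //; split=> //; lia.
    exists z; split; first exact: le_refl.
    split=> //; split=> //.
    by move=> E; subst z; apply: Hn; apply: le_refl.
  have [HPw HRw] := Hup z w (conj HP HR) Hzw.
  have HUw : ~ Uc e x w.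
    move/Uc_up => H; case: (le_dep Hx H) => [E|]; [by apply: Hwx | lia].
  have Hcov1 : forall u, prec e x u -> prec e w u.
    move=> u Hu.
    have Hwu : le e w u.
      have := HRw u (proj2 (covers_spec _ _ _) Hu); rewrite /impS => H.
      apply: NNPP => Hn'; apply: H; exists w; split; first exact: le_refl.
      by split.
    apply: le_cover Hwb Hwu _; have := prec_dep Hu; lia.
  have Hcov2 : forall u, prec e w u -> prec e x u.
    move=> u Hu.
    have Hul : In u (layer n d.-1).
      apply/layer_spec; have [_ Hub] := prec_nbot Hu; split=> //.
      have := prec_dep Hu; lia.
    case: (HPw u Hul) => [/covers_spec //|Hn'].
    by exfalso; apply: Hn'; exact: prec_le Hu.
  apply: Hwx; symmetry; apply: (rigid hn hE Hx Hwb) => //; lia.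
- move=> Hxz; split.
    move=> w /layer_spec [Hw Hwd].
    case: (classic (le e z w)) => H; [left | by right].
    apply/covers_spec; apply: le_cover Hx (le_trans Hxz H) _; lia.
  move=> y /covers_spec Hy [v [Hzv [Hv1 Hv2]]].
  have Hxv := le_trans Hxz Hzv.
  case: (le_step Hx Hxv) => [E|[y' [Hy' Hy'v]]].
    by subst v; apply: Hv1; exact: prec_le Hy.
  by apply: Hv2; exists y'; split=> //; apply/covers_spec.
Qed.

Lemma clopen_all n (S : pset n) : (forall x, S x) -> is_clopen S.
Proof.
move=> H; split; first by right; exists [::] => x /(_ (H x)).
by left => /(_ (H Pbot)).
Qed.

Lemma clopen_fin n (S : pset n) (l : seq (pt n)) : ~ S Pbot -> (forall x, S x -> In x l) -> is_clopen S.
Proof.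
move=> Hb Hl; split; first by left.
by right; exists l => x Hx; apply: Hl; apply: NNPP.
Qed.

Lemma cu_all n (e : seq (triple n)) (S : pset n) : clopen_upset e S -> S Pbot -> forall x, S x.
Proof. by case=> _ Hu Hb x; apply: Hu Hb; left. Qed.

Lemma cu_fin n (e : seq (triple n)) (S : pset n) : clopen_upset e S -> ~ S Pbot ->
  exists l, forall x, S x -> In x l.
Proof.
case=> [[_ [H|[l Hl]]] _] Hb; first by exfalso; apply: H.
by exists l => x Hx; apply: Hl.
Qed.

Lemma Gen_cu n (e : seq (triple n)) (hn : 2 <= n) (hE : enumeration_of_Tn e) (S : pset n) :
  clopen_upset e S -> Gen e S.
Proof.
move=> HS; case: (classic (S Pbot)) => Hb.
  by apply: Gen_ext (Gen_top e) => x; split=> // _; apply: (cu_all HS Hb).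
have [l Hl] := cu_fin HS Hb.
apply: Gen_ext (Gen_bigU (l := l) (F := fun x z => S x /\ le e x z) _).
  move=> z; split.
    by case=> a [_ [Sa Ha]]; case: HS => _ Hu; apply: Hu Ha Sa.
  by move=> Sz; exists z; split; [apply: Hl | split=> //; apply: le_refl].
move=> a _; case: (classic (S a)) => Sa.
  have Ha : a <> Pbot by move=> E; subst.
  apply: Gen_ext (Gen_up hn hE erefl Ha) => z; split; first by split.
  by case.
by apply: Gen_ext (Gen_bot e) => z; split=> // - [].
Qed.

Lemma gen_cu n (e : seq (triple n)) (i : 'I_n.+1) : clopen_upset e (gen i).
Proof.
split; last by move=> x y H Hx; exact: gen_up Hx H.
apply: (clopen_fin (l := [seq Pc 0 k | k <- allI n])); first by case=> k [].
by move=> x [k [-> _]]; apply/In_map_iff; exists k; split=> //; apply: In_allI.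
Qed.

Lemma kgen n (e : seq (triple n)) (hn : 2 <= n) (hE : enumeration_of_Tn e) :
  dual_k_generated e n.+1.
Proof.
exists (@gen n); split; first exact: gen_cu.
move=> S HS; exact: Gen_cu hn hE S HS.
Qed.

Lemma cu_top n (e : seq (triple n)) : clopen_upset e (@topS n).
Proof. split; [exact: clopen_all | by []]. Qed.

Lemma cu_botS n (e : seq (triple n)) : clopen_upset e (@botS n).
Proof. split; [exact: (clopen_fin (l := [::])) | by []]. Qed.

Lemma cu_meet n (e : seq (triple n)) (S T : pset n) :
  clopen_upset e S -> clopen_upset e T -> clopen_upset e (meetS S T).
Proof.
move=> HS HT; split; last first.
  by move=> x y H [Sx Tx]; split; [case: HS => _ Hu; apply: Hu H Sx | case: HT => _ Hu; apply: Hu H Tx].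
case: (classic (S Pbot)) => HSb; case: (classic (T Pbot)) => HTb.
- by apply: clopen_all => x; split; [exact: (cu_all HS HSb) | exact: (cu_all HT HTb)].
- have [l Hl] := cu_fin HT HTb.
  by apply: (clopen_fin (l := l)) => [[]|x [_ /Hl]].
- have [l Hl] := cu_fin HS HSb.
  by apply: (clopen_fin (l := l)) => [[]|x [/Hl]].
- have [l Hl] := cu_fin HS HSb.
  by apply: (clopen_fin (l := l)) => [[]|x [/Hl]].
Qed.

Lemma cu_join n (e : seq (triple n)) (S T : pset n) :
  clopen_upset e S -> clopen_upset e T -> clopen_upset e (joinS S T).
Proof.
move=> HS HT; split; last first.
  by move=> x y H [Sx|Tx]; [left; case: HS => _ Hu; apply: Hu H Sx | right; case: HT => _ Hu; apply: Hu H Tx].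
case: (classic (S Pbot)) => HSb.
  by apply: clopen_all => x; left; exact: (cu_all HS HSb).
case: (classic (T Pbot)) => HTb.
  by apply: clopen_all => x; right; exact: (cu_all HT HTb).
have [l1 Hl1] := cu_fin HS HSb; have [l2 Hl2] := cu_fin HT HTb.
apply: (clopen_fin (l := l1 ++ l2)); first by case.
by move=> x [/Hl1 H|/Hl2 H]; apply/In_cat_iff; [left|right].
Qed.

Lemma cu_imp n (e : seq (triple n)) (hn : 2 <= n) (hE : enumeration_of_Tn e) (S T : pset n) :
  clopen_upset e S -> clopen_upset e T -> clopen_upset e (impS e S T).
Proof.
move=> HS HT; split; last by move=> x y H Hx; exact: impS_up Hx H.
case: (classic (exists y0, S y0 /\ ~ T y0)) => [[y0 [Sy0 Ty0]]|Hno]; last first.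
  by apply: clopen_all => x [v [_ [Sv Tv]]]; apply: Hno; exists v.
have Hb : ~ impS e S T Pbot by apply; exists y0; split=> //; left.
case: (classic (y0 = Pbot)) => Hy0.
  subst y0; have HTb : ~ T Pbot by [].
  have [l Hl] := cu_fin HT HTb.
  apply: (clopen_fin (l := l)) => // x Hx; apply: Hl; apply: NNPP => nT.
  by apply: Hx; exists x; split; [exact: le_refl | split=> //; exact: (cu_all HS Sy0)].
apply: (clopen_fin (l := upto n (dep y0).+1)) => // x Hx.
have Hxb : x <> Pbot by move=> E; subst.
apply: In_upto => //; case: (leqP (dep x) (dep y0).+1) => // Hlt.
by exfalso; apply: Hx; exists y0; split=> //; apply: deep.
Qed.

Lemma dg_cu n (e : seq (triple n)) (hn : 2 <= n) (hE : enumeration_of_Tn e) (S : pset n) :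
  dual_gen e (@GG n) S -> clopen_upset e S.
Proof.
elim=> {S}.
- by move=> S [i ->]; exact: gen_cu.
- exact: cu_botS.
- exact: cu_top.
- by move=> S T _ H1 _ H2; exact: cu_meet.
- by move=> S T _ H1 _ H2; exact: cu_join.
- by move=> S T _ H1 _ H2; exact: cu_imp.
Qed.

Lemma up_cu n (e : seq (triple n)) (x : pt n) : x <> Pbot -> clopen_upset e (up e x).
Proof.
move=> Hx; split; last by move=> a b H Ha; exact: le_trans Ha H.
apply: (clopen_fin (l := upto n (dep x))).
  by move=> H; exact: le_nbot Hx H erefl.
move=> z Hz; apply: In_upto; first exact: le_nbot Hx Hz.
by case: (le_dep Hx Hz) => [->|]; lia.
Qed.

Lemma pigeon n (l : seq (pset n)) : forall (P : nat -> pset n),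
  (forall i j, set_eq (P i) (P j) -> i = j) ->
  (forall m, exists S', In S' l /\ set_eq (P m) S') -> False.
Proof.
elim: l => [|S0 l IH] P Hinj Hcov.
  by have [S' [[] _]] := Hcov 0.
case: (classic (exists m0, set_eq (P m0) S0)) => [[m0 Hm0]|Hno].
  pose f k := if k < m0 then k else k.+1.
  apply: (IH (fun k => P (f k))).
    move=> i j H; have := Hinj _ _ H; rewrite /f.
    by case: (ltnP i m0); case: (ltnP j m0); lia.
  move=> k; have [S' [[E|HS'] HPS]] := Hcov (f k); last by exists S'.
  subst S'; exfalso.
  have := Hinj (f k) m0 (seq_trans HPS (seq_sym Hm0)); rewrite /f.
  by case: (ltnP k m0); lia.
apply: (IH P Hinj) => m; have [S' [[E|HS'] HPS]] := Hcov m; last by exists S'.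
by subst; exfalso; apply: Hno; exists m.
Qed.

Lemma dual_inf n (e : seq (triple n)) : dual_infinite e.
Proof.
move=> [l Hl]; apply: (pigeon (l := l) (P := fun m => up e (Pa n m))).
  move=> i j H.
  have H1 : le e (Pa n j) (Pa n i) by apply/(H (Pa n i)); exact: le_refl.
  have H2 : le e (Pa n i) (Pa n j) by apply/(H (Pa n j)); exact: le_refl.
  case: (le_dep (x := Pa n j) ltac:(discriminate) H1) => [[->]//|/= ?].
  case: (le_dep (x := Pa n i) ltac:(discriminate) H2) => [[->]//|/= ?].
  lia.
by move=> m; apply: Hl; apply: up_cu.
Qed.

Lemma sig_eq (A : Type) (P : A -> Prop) (x y : {a | P a}) :
  proj1_sig x = proj1_sig y -> x = y.
Proof.
case: x => a pa; case: y => b pb /= E; subst b; f_equal; apply: proof_irrelevance.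
Qed.

Definition carB n (e : seq (triple n)) := {S : pset n | dual_gen e (@GG n) S}.

Definition BB n (e : seq (triple n)) : HAlg :=
  {| hcar := carB e;
     hbot := exist _ (@botS n) (@dg_bot n e (@GG n));
     htop := exist _ (@topS n) (@dg_top n e (@GG n));
     hmeet := fun x y => exist _ (meetS (proj1_sig x) (proj1_sig y)) (dg_meet (proj2_sig x) (proj2_sig y));
     hjoin := fun x y => exist _ (joinS (proj1_sig x) (proj1_sig y)) (dg_join (proj2_sig x) (proj2_sig y));
     himp := fun x y => exist _ (impS e (proj1_sig x) (proj1_sig y)) (dg_imp (proj2_sig x) (proj2_sig y)) |}.

Lemma heval_sval n (e : seq (triple n)) (w : nat -> hcar (BB e)) t :
  proj1_sig (heval w t) = deval e (fun i => proj1_sig (w i)) t.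
Proof. by elim: t => //= s IHs u IHu; rewrite IHs IHu. Qed.

Lemma BB_var n (e : seq (triple n)) (hn : 2 <= n) (hE : enumeration_of_Tn e) :
  in_variety_dual e (BB e).
Proof.
move=> s t Hst w; apply: sig_eq; rewrite !heval_sval.
apply: functional_extensionality => z; apply: propositional_extensionality.
apply: Hst => i; exact: dg_cu hn hE _ (proj2_sig (w i)).
Qed.

Lemma BB_fg n (e : seq (triple n)) : finitely_generated (BB e).
Proof.
pose l : seq (hcar (BB e)) :=
  [seq exist (fun S => dual_gen e (@GG n) S) (gen i) (@dg_base n e (@GG n) (gen i) (ex_intro _ i erefl)) | i <- enum 'I_n.+1].
exists l.
suff H : forall S, dual_gen e (@GG n) S -> forall p, @hgen (BB e) (fun y => In y l) (exist _ S p).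
  by case=> S p; apply: H.
move=> S0; elim=> {S0}.
- move=> S [i ->] p; apply: hg_base; apply/In_map_iff; exists i; split.
    exact: In_mem (mem_enum _ _).
  exact: sig_eq.
- move=> p; have -> : exist _ (@botS n) p = @hbot (BB e) by apply: sig_eq.
  exact: hg_bot.
- move=> p; have -> : exist _ (@topS n) p = @htop (BB e) by apply: sig_eq.
  exact: hg_top.
- move=> S T HS IHS HT IHT p.
  have -> : exist _ (meetS S T) p = @hmeet (BB e) (exist _ S HS) (exist _ T HT) by apply: sig_eq.
  exact: hg_meet.
- move=> S T HS IHS HT IHT p.
  have -> : exist _ (joinS S T) p = @hjoin (BB e) (exist _ S HS) (exist _ T HT) by apply: sig_eq.
  exact: hg_join.
- move=> S T HS IHS HT IHT p.
  have -> : exist _ (impS e S T) p = @himp (BB e) (exist _ S HS) (exist _ T HT) by apply: sig_eq.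
  exact: hg_imp.
Qed.

Lemma BB_inf n (e : seq (triple n)) (hn : 2 <= n) (hE : enumeration_of_Tn e) :
  ~ finite_alg (BB e).
Proof.
move=> [l Hl]; apply: (dual_inf (e := e)).
exists [seq proj1_sig x | x <- l] => S HS.
have [S' [HS' HSS']] := Gen_cu hn hE HS.
exists S'; split=> //; apply/In_map_iff.
by exists (exist _ S' HS'); split=> //; apply: Hl.
Qed.

Theorem mainTheorem7 (n : nat) (e : seq (triple n)) :
  2 <= n -> enumeration_of_Tn e ->
  dual_infinite e /\ dual_k_generated e n.+1 /\ ~ variety_dual_locally_finite e.
Proof.
move=> hn hE; split; first exact: dual_inf.
split; first exact: kgen.
move=> H; apply: (BB_inf hn hE); apply: H; [exact: BB_var | exact: BB_fg].
Qed.
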